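(* Let $F$ be a face of $\Delta$, let $\mathfrak r$ be the orthogonal complement of $\mathfrak n\cap\mathbb R^{I_F}$ in $\mathfrak n$, and let $z\in(\mathbb C^* )^{F^c}$. Then there exist a unique point $x\in\Psi_\Delta^{-1}(0)$, a unique point $\xi\in F$ and a unique $Y\in\mathfrak r$ such that $Az\cap\Psi_\Delta^{-1}(0)=\{x\}$, $\exp(iY)z=x$, and $\langle\xi,X_j\rangle-\lambda_j=|x_j|^2$ for $j=1,\dots,d$.
   Context: Let $\mathfrak d$ be an $n$-dimensional real vector space. Let $\Delta\subset\mathfrak d^*$ be an $n$-dimensional convex polytope with $d$ facets, $\Delta=\bigcap_{j=1}^d\{\mu\in\mathfrak d^*:\langle\mu,X_j\rangle\ge\lambda_j\}$, with chosen inward normals $X_1,\dots,X_d\in\mathfrak d$ and $\lambda_j\in\mathbb R$. For each face $F$, $I_F$ is such that $F=\{\mu\in\Delta:\langle\mu,X_j\rangle=\lambda_j\iff j\in I_F\}$. $(\mathbb C^* )^{F^c}=\{z\in\mathbb C^d:z_j=0\ (j\in I_F),\ z_j\ne0\ (j\notin I_F)\}$; $\mathbb R^{I_F}\subseteq\mathbb R^d$ is the coordinate subspace spanned by $e_j$, $j\in I_F$. $\pi:\mathbb R^d\to\mathfrak d$, $e_j\mapsto X_j$; $\mathfrak n=\ker\pi$ with the inner product induced from the standard one on $\mathbb R^d$; $\iota:\mathfrak n\to\mathbb R^d$ the inclusion. $A=\{\exp(iY):Y\in\mathfrak n\}$ acts on $\mathbb C^d$ by $z_j\mapsto e^{-2\pi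 Y_j}z_j$. $\Psi_\Delta:\mathbb C^d\to\mathfrak n^*$, $\Psi_\Delta(z)=\sum_{j=1}^d(|z_j|^2+\lambda_j)\iota^*(e_j^* )$. *)

(* Defs.v *)
From mathcomp Require Import ssreflect ssrfun ssrbool eqtype ssrnat fintype bigop.
From Stdlib Require Import Reals.
Open Scope R_scope.

(* Coordinates: d = R^n, its dual identified with R^n via the dot product. *)
Definition vec (k : nat) := 'I_k -> R.

Definition dot {k : nat} (u v : vec k) : R := \big[Rplus/0]_(i < k) (u i * v i).

Definition cplx := (R * R)%type.
Definition czero : cplx := (0, 0).
Definition cnormsq (c : cplx) : R := fst c * fst c + snd c * snd c.
Definition cscale (r : R) (c : cplx) : cplx := (r * fst c, r * snd c).

Section Toric.
Context {n d : nat} (X : 'I_d -> vec n) (lam : vec d).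

Definition inDelta (mu : vec n) : Prop := forall j, dot mu (X j) >= lam j.

Definition full_dim : Prop := exists mu, forall j, dot mu (X j) > lam j.
Definition delta_bounded : Prop :=
  exists B, forall mu, inDelta mu -> forall i, Rabs (mu i) <= B.
(* each inequality j defines its own facet of Delta (d facets, no redundant
   inequality, distinct j give distinct facets) *)
Definition facets_distinct : Prop :=
  forall j, exists mu, inDelta mu /\ dot mu (X j) = lam j /\
    forall k, k <> j -> dot mu (X k) > lam k.

(* the (open) face F with index set I_F = I *)
Definition in_face (I : pred 'I_d) (mu : vec n) : Prop :=
  inDelta mu /\ forall j, (dot mu (X j) = lam j <-> I j).
Definition is_face (I : pred 'I_d) : Prop := exists mu, in_face I mu.

Definition pi_map (Y : vec d) : vec n :=
  fun i => \big[Rplus/0]_(j < d) (Y j * X j i).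
Definition in_n (Y : vec d) : Prop := forall i, pi_map Y i = 0.
Definition in_n_I (I : pred 'I_d) (Y : vec d) : Prop :=
  in_n Y /\ forall j, ~~ I j -> Y j = 0.
Definition in_r (I : pred 'I_d) (Y : vec d) : Prop :=
  in_n Y /\ forall W, in_n_I I W -> dot Y W = 0.

Definition in_CstarFc (I : pred 'I_d) (z : 'I_d -> cplx) : Prop :=
  forall j, (I j -> z j = czero) /\ (~~ I j -> z j <> czero).

(* action of exp(iY), Y in n:  z_j |-> e^{-2 pi Y_j} z_j *)
Definition act (Y : vec d) (z : 'I_d -> cplx) : 'I_d -> cplx :=
  fun j => cscale (exp (- (2 * PI * Y j))) (z j).

(* Psi_Delta(z) in n^*, as the functional Y |-> sum_j (|z_j|^2 + lam_j) Y_j on n *)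
Definition Psi (z : 'I_d -> cplx) (Y : vec d) : R :=
  \big[Rplus/0]_(j < d) ((cnormsq (z j) + lam j) * Y j).
Definition Psi_zero (z : 'I_d -> cplx) : Prop := forall Y, in_n Y -> Psi z Y = 0.

Definition in_orbit (z w : 'I_d -> cplx) : Prop := exists Y, in_n Y /\ act Y z = w.

End Toric.

(* Main.v *)
From Pilot Require Import Defs.
From HB Require Import structures.
From mathcomp Require Import all_boot all_algebra.
Import GRing.Theory.
From Stdlib Require Import Reals Lra Lia Classical ClassicalEpsilon FunctionalExtensionality.
Import Pilot.Defs.
Open Scope R_scope.
Delimit Scope ring_scope with ring.

Definition Req_bool (x y : R) : bool := if Req_dec_T x y then true else false.
Lemma Req_boolP : Equality.axiom Req_bool.
Proof. move=> x y; rewrite /Req_bool; case: Req_dec_T => h; by constructor. Qed.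
HB.instance Definition _ := hasDecEq.Build R Req_boolP.

Definition Rfind (P : pred R) (k : nat) : option R :=
  match excluded_middle_informative (exists x, P x) with
  | left h => Some (proj1_sig (constructive_indefinite_description _ h))
  | right _ => None end.
Lemma Rfind_some P k x : Rfind P k = Some x -> P x.
Proof. rewrite /Rfind; case: excluded_middle_informative => // h [<-].
exact: proj2_sig (constructive_indefinite_description _ h). Qed.
Lemma Rfind_ex (P : pred R) : (exists x, P x) -> exists k, Rfind P k.
Proof. move=> h; exists 0%nat; rewrite /Rfind; case: excluded_middle_informative => //. Qed.
Lemma Rfind_ext (P Q : pred R) : P =1 Q -> Rfind P =1 Rfind Q.
Proof. move=> h k; have -> : P = Q by apply: functional_extensionality. done. Qed.
HB.instance Definition _ := hasChoice.Build R Rfind_some Rfind_ex Rfind_ext.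

Lemma Radd_assoc : associative Rplus. Proof. move=> *; by rewrite Rplus_assoc. Qed.
Lemma Radd_comm : commutative Rplus. Proof. move=> *; by rewrite Rplus_comm. Qed.
Lemma Radd_0l : left_id 0 Rplus. Proof. move=> *; by rewrite Rplus_0_l. Qed.
Lemma Radd_Nl : left_inverse 0 Ropp Rplus. Proof. move=> *; by rewrite Rplus_opp_l. Qed.
Lemma Rmul_assoc : associative Rmult. Proof. move=> *; by rewrite Rmult_assoc. Qed.
Lemma Rmul_comm : commutative Rmult. Proof. move=> *; by rewrite Rmult_comm. Qed.
Lemma Rmul_1l : left_id 1 Rmult. Proof. move=> *; by rewrite Rmult_1_l. Qed.
Lemma Rmul_Dl : left_distributive Rmult Rplus. Proof. move=> *; by rewrite Rmult_plus_distr_r. Qed.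
HB.instance Definition _ := (@GRing.isZmodule.Build R 0 Ropp Rplus) Radd_assoc Radd_comm Radd_0l Radd_Nl.
Lemma R1_neq0 : (1 != 0 :> R).
Proof. apply/eqP; exact R1_neq_R0. Qed.
HB.instance Definition _ := (@GRing.Zmodule_isComNzRing.Build R 1 Rmult) Rmul_assoc Rmul_comm Rmul_1l Rmul_Dl R1_neq0.
Lemma Rfield_ax (x : R) : x != 0 -> Rinv x * x = 1.
Proof. move/eqP=> h; exact: Rinv_l. Qed.
HB.instance Definition _ := (@GRing.ComNzRing_isField.Build R Rinv) Rfield_ax Rinv_0.

HB.instance Definition _ := Monoid.isComLaw.Build R 0 Rplus Radd_assoc Radd_comm Radd_0l.

Section LA.
Local Open Scope ring_scope.
Lemma mmT0 (p q : nat) (M : 'M[R]_(p, q)) : M *m M^T = 0 -> M = 0.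
Proof.
move=> h; apply/matrixP => i j; rewrite mxE.
have := congr1 (fun N : 'M[R]_p => N i i) h; rewrite !mxE => hs.
have hs' : \big[Rplus/R0]_(l < q) (Rmult (M i l) (M i l)) = R0.
  by rewrite -[X in _ = X]hs; apply: eq_bigr => l _; rewrite mxE.
have hnn : forall l, Rle R0 (Rmult (M i l) (M i l)) by move=> l; apply: Rle_0_sqr.
have key : forall (s : seq 'I_q), uniq s -> j \in s ->
   Rle (Rmult (M i j) (M i j)) (\big[Rplus/R0]_(l <- s) (Rmult (M i l) (M i l))).
  elim=> [|a s IH] //= /andP [ha hu]; rewrite in_cons big_cons => /orP [/eqP <-|hj].
  - have : Rle R0 (\big[Rplus/R0]_(l <- s) (Rmult (M i l) (M i l))).
      by elim: s {IH ha hu} => [|b s IH]; rewrite ?big_nil ?big_cons; [apply: Rle_refl| have := hnn b; lra].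
    move=> ?; lra.
  - have := IH hu hj; have := hnn a; lra.
have := key (index_enum 'I_q) (index_enum_uniq _) (mem_index_enum j).
rewrite hs' => hle.
have := hnn j => hge.
have h0 : (Rmult (M i j) (M i j) = R0) by lra.
by case: (Rmult_integral _ _ h0).
Qed.


Lemma LA1 (d n : nat) (A : 'M[R]_(d, n)) (c : 'rV[R]_d) :
  c *m (kermx A)^T = 0 -> exists xi : 'rV[R]_n, c = xi *m A^T.
Proof.
move=> hc.
have h1 : (A^T <= kermx (kermx A)^T)%MS.
  by apply/sub_kermxP; rewrite -trmx_mul mulmx_ker trmx0.
have hr : \rank (kermx (kermx A)^T) = \rank A^T.
  rewrite mxrank_ker mxrank_tr mxrank_ker mxrank_tr subKn //; exact: rank_leq_row.
have heq : (A^T == kermx (kermx A)^T)%MS.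
  by rewrite -(mxrank_leqif_eq h1).2 hr.
have hc2 : (c <= kermx (kermx A)^T)%MS by apply/sub_kermxP.
have hc3 : (c <= A^T)%MS.
  by apply: submx_trans hc2 _; case/andP: heq.
case/submxP: hc3 => D ->; by exists D.
Qed.

Lemma LA3 (k d : nat) (B : 'M[R]_(k, d)) (y : 'rV[R]_d) :
  exists w : 'rV[R]_d, (w <= B)%MS /\ (y - w) *m B^T = 0.
Proof.
set S := row_base B.
set G := S *m S^T.
have hG : G \in unitmx.
  rewrite -row_free_unit -kermx_eq0; apply/eqP.
  have h : kermx G *m S = 0.
    apply: mmT0; rewrite trmx_mul mulmxA -(mulmxA _ S) -/G mulmx_ker mul0mx //.
  by apply/eqP; rewrite -(mulmx_free_eq0 _ (row_base_free B)) h.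
have hBS : (B <= S)%MS by rewrite eq_row_base.
have hSB : (S <= B)%MS by rewrite eq_row_base.
exists (y *m S^T *m invmx G *m S); split.
  exact: submx_trans (submxMl _ _) hSB.
case/submxP: hBS => D hD.
have -> : B^T = S^T *m D^T by rewrite -trmx_mul -hD.
have h0 : (y - y *m S^T *m invmx G *m S) *m S^T = 0.
  by rewrite mulmxBl -(mulmxA _ S) -/G -(mulmxA _ (invmx G)) mulVmx // mulmx1 subrr.
by rewrite mulmxA h0 mul0mx.
Qed.

End LA.

Lemma sR_nonneg (T : Type) (s : seq T) (F : T -> R) :
  (forall i, 0 <= F i) -> 0 <= \big[Rplus/0]_(i <- s) F i.
Proof. move=> h; elim: s => [|a s IH]; rewrite ?big_nil ?big_cons; [lra| have := h a; lra]. Qed.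

Lemma sR_le (T : Type) (s : seq T) (F G : T -> R) :
  (forall i, F i <= G i) -> \big[Rplus/0]_(i <- s) F i <= \big[Rplus/0]_(i <- s) G i.
Proof. move=> h; elim: s => [|a s IH]; rewrite ?big_nil ?big_cons; [lra| have := h a; lra]. Qed.

Lemma sR_add (T : Type) (s : seq T) (F G : T -> R) :
  \big[Rplus/0]_(i <- s) (F i + G i) = \big[Rplus/0]_(i <- s) F i + \big[Rplus/0]_(i <- s) G i.
Proof. elim: s => [|a s IH]; rewrite ?big_nil ?big_cons; [lra| rewrite IH; lra]. Qed.

Lemma sR_scal (T : Type) (s : seq T) (c : R) (F : T -> R) :
  \big[Rplus/0]_(i <- s) (c * F i) = c * \big[Rplus/0]_(i <- s) F i.
Proof. elim: s => [|a s IH]; rewrite ?big_nil ?big_cons; [lra| rewrite IH; lra]. Qed.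

Lemma sR_opp (T : Type) (s : seq T) (F : T -> R) :
  \big[Rplus/0]_(i <- s) (- F i) = - \big[Rplus/0]_(i <- s) F i.
Proof. elim: s => [|a s IH]; rewrite ?big_nil ?big_cons; [lra| rewrite IH; lra]. Qed.

Lemma sR_sub (T : Type) (s : seq T) (F G : T -> R) :
  \big[Rplus/0]_(i <- s) (F i - G i) = \big[Rplus/0]_(i <- s) F i - \big[Rplus/0]_(i <- s) G i.
Proof. elim: s => [|a s IH]; rewrite ?big_nil ?big_cons; [lra| rewrite IH; lra]. Qed.

Lemma sR_ext (T : Type) (s : seq T) (F G : T -> R) :
  (forall i, F i = G i) -> \big[Rplus/0]_(i <- s) F i = \big[Rplus/0]_(i <- s) G i.
Proof. move=> h; elim: s => [|a s IH]; rewrite ?big_nil ?big_cons //; by rewrite IH h. Qed.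

Lemma sR_0 (T : Type) (s : seq T) (F : T -> R) :
  (forall i, F i = 0) -> \big[Rplus/0]_(i <- s) F i = 0.
Proof. move=> h; elim: s => [|a s IH]; rewrite ?big_nil ?big_cons //; rewrite IH h; lra. Qed.

Lemma sR_term (k : nat) (F : 'I_k -> R) (j : 'I_k) :
  (forall i, 0 <= F i) -> F j <= \big[Rplus/0]_(i < k) F i.
Proof.
move=> hnn.
have key : forall (s : seq 'I_k), j \in s -> F j <= \big[Rplus/0]_(l <- s) F l.
  elim=> [|a s IH] //=; rewrite in_cons big_cons => /orP [/eqP <-|hj].
  - have := @sR_nonneg _ s F hnn; lra.
  - have := IH hj; have := hnn a; lra.
exact: key (mem_index_enum j).
Qed.

Lemma sR_eq0 (k : nat) (F : 'I_k -> R) :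
  (forall i, 0 <= F i) -> \big[Rplus/0]_(i < k) F i = 0 -> forall j, F j = 0.
Proof. move=> hnn h0 j; have := @sR_term k F j hnn; have := hnn j; lra. Qed.

Lemma sR_cv (T : Type) (s : seq T) (F : nat -> T -> R) (l : T -> R) :
  (forall i, Un_cv (fun k => F k i) (l i)) ->
  Un_cv (fun k => \big[Rplus/0]_(i <- s) F k i) (\big[Rplus/0]_(i <- s) l i).
Proof.
move=> h; elim: s => [|a s IH].
- rewrite big_nil. have -> : (fun k => \big[Rplus/0]_(i <- [::]) F k i) = (fun _ => 0).
    by apply: functional_extensionality => k; rewrite big_nil.
  move=> e he; exists 0%nat => k _; rewrite /R_dist Rminus_0_r Rabs_R0; lra.
- rewrite big_cons. have -> : (fun k => \big[Rplus/0]_(i <- a :: s) F k i) =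
     (fun k => F k a + \big[Rplus/0]_(i <- s) F k i).
    by apply: functional_extensionality => k; rewrite big_cons.
  exact: CV_plus (h a) IH.
Qed.

Lemma sR_deriv (T : Type) (s : seq T) (F : T -> R -> R) (l : T -> R) (x : R) :
  (forall i, derivable_pt_lim (F i) x (l i)) ->
  derivable_pt_lim (fun t => \big[Rplus/0]_(i <- s) F i t) x (\big[Rplus/0]_(i <- s) l i).
Proof.
move=> h; elim: s => [|a s IH].
- rewrite big_nil. have -> : (fun t => \big[Rplus/0]_(i <- [::]) F i t) = (fun _ => 0).
    by apply: functional_extensionality => k; rewrite big_nil.
  exact: derivable_pt_lim_const.
- rewrite big_cons. have -> : (fun t => \big[Rplus/0]_(i <- a :: s) F i t) =
     (fun t => F a t + \big[Rplus/0]_(i <- s) F i t).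
    by apply: functional_extensionality => k; rewrite big_cons.
  exact: derivable_pt_lim_plus (h a) IH.
Qed.

Lemma sR_exchange (k m : nat) (F : 'I_k -> 'I_m -> R) :
  \big[Rplus/0]_(i < k) \big[Rplus/0]_(j < m) F i j = \big[Rplus/0]_(j < m) \big[Rplus/0]_(i < k) F i j.
Proof. exact: exchange_big. Qed.

Lemma mx0E m k i j : (0%ring : 'M[R]_(m,k)) i j = 0.
Proof. by rewrite mxE. Qed.

Definition rv {k : nat} (Y : vec k) : 'rV[R]_k := \row_j Y j.
Definition Amat {n d : nat} (X : 'I_d -> vec n) : 'M[R]_(d, n) := \matrix_(j, i) X j i.
Definition Dmask {d : nat} (I : pred 'I_d) : 'M[R]_d :=
  diag_mx (\row_j (if I j then 0 else 1)).
Definition unrv {k : nat} (u : 'rV[R]_k) : vec k := fun j => u ord0 j.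

Lemma rvK k (Y : vec k) : unrv (rv Y) = Y.
Proof. apply: functional_extensionality => j; by rewrite /unrv /rv mxE. Qed.
Lemma unrvK k (u : 'rV[R]_k) : rv (unrv u) = u.
Proof. apply/matrixP => i j; rewrite /unrv /rv mxE; by rewrite (ord1 i). Qed.

Lemma pi_mx n d (X : 'I_d -> vec n) Y i : pi_map X Y i = (rv Y *m Amat X)%ring ord0 i.
Proof. rewrite /pi_map !mxE; apply: sR_ext => j; by rewrite !mxE. Qed.

Lemma in_n_mx n d (X : 'I_d -> vec n) Y : in_n X Y <-> (rv Y *m Amat X = 0)%ring.
Proof.
split.
- move=> h; apply/matrixP => i j; rewrite (ord1 i) -pi_mx h mx0E //.
- move=> h i; by rewrite pi_mx h mx0E.
Qed.

Lemma in_n_ker n d (X : 'I_d -> vec n) Y : in_n X Y <-> (rv Y <= kermx (Amat X))%MS.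
Proof. rewrite in_n_mx; split; [by move=> h; apply/sub_kermxP | by move/sub_kermxP]. Qed.

Lemma Dmask_mul d (I : pred 'I_d) (u : 'rV[R]_d) j :
  (u *m Dmask I)%ring ord0 j = (if I j then 0 else u ord0 j).
Proof. rewrite /Dmask mul_mx_diag !mxE; case: (I j) => /=; [exact: Rmult_0_r | exact: Rmult_1_r]. Qed.

Lemma maskD_ker d (I : pred 'I_d) W :
  (forall j, ~~ I j -> W j = 0) <-> (rv W <= kermx (Dmask I))%MS.
Proof.
rewrite sub_kermx; split.
- move=> h2; apply/eqP/matrixP => i j; rewrite (ord1 i) Dmask_mul.
  rewrite mx0E; case hj: (I j) => //; rewrite /rv mxE h2 //; by rewrite hj.
- move/eqP => h2 j hj; have := congr1 (fun M : 'M[R]_(1, d) => M ord0 j) h2 => /=.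
  by rewrite Dmask_mul (negbTE hj) mx0E /rv mxE.
Qed.

Lemma in_nI_ker n d (X : 'I_d -> vec n) (I : pred 'I_d) W :
  in_n_I X I W <-> (rv W <= (kermx (Amat X) :&: kermx (Dmask I)))%MS.
Proof.
rewrite sub_capmx; split.
- by case=> /in_n_ker -> /maskD_ker ->.
- by case/andP => /in_n_ker h1 /maskD_ker h2.
Qed.

Lemma dot_mx k (u v : vec k) : dot u v = ((rv u *m (rv v)^T)%ring) ord0 ord0.
Proof. rewrite /dot !mxE; apply: sR_ext => j; by rewrite !mxE. Qed.

Lemma dotA_mx n d (X : 'I_d -> vec n) (xi : 'rV[R]_n) j :
  dot (unrv xi) (X j) = ((xi *m (Amat X)^T)%ring) ord0 j.
Proof. rewrite /dot !mxE; apply: sR_ext => i; by rewrite !mxE. Qed.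

Definition hfun (a c t : R) : R := a * exp (-(4*PI*t)) / (4*PI) + c*t.

Lemma PI4_pos : 0 < 4 * PI.
Proof. have := PI_RGT_0; lra. Qed.

Lemma hder a c x : derivable_pt_lim (hfun a c) x (c - a * exp(-(4*PI*x))).
Proof.
have e : hfun a c = (fun t => (a / (4*PI)) * exp (-(4*PI*t)) + c * t).
  apply: functional_extensionality => t; rewrite /hfun; field; have := PI4_pos; lra.
rewrite e.
have d1 : derivable_pt_lim (fun t => -(4*PI*t)) x (-(4*PI)).
  have e1 : (fun t => -(4*PI*t)) = mult_real_fct (-(4*PI)) id.
    by apply: functional_extensionality => t; rewrite /mult_real_fct /id; ring.
  rewrite e1; have := derivable_pt_lim_scal id (-(4*PI)) x 1 (derivable_pt_lim_id x).
  by rewrite Rmult_1_r.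
have d2 := derivable_pt_lim_comp _ exp x _ _ d1 (derivable_pt_lim_exp _).
have d3 := derivable_pt_lim_scal _ (a / (4*PI)) x _ d2.
have d4 : derivable_pt_lim (fun t => c * t) x c.
  have e1 : (fun t => c * t) = mult_real_fct c id.
    by apply: functional_extensionality => t; rewrite /mult_real_fct /id.
  rewrite e1; have := derivable_pt_lim_scal id c x 1 (derivable_pt_lim_id x).
  by rewrite Rmult_1_r.
have d5 := derivable_pt_lim_plus _ _ x _ _ d3 d4.
have e3 : c - a * exp (- (4 * PI * x)) = a / (4 * PI) * (exp (- (4 * PI * x)) * - (4 * PI)) + c.
  field; have := PI4_pos; lra.
rewrite e3; exact: d5.
Qed.

Lemma hder_aff a c p q : derivable_pt_lim (fun t => hfun a c (p + t * q)) 0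
    ((c - a * exp(-(4*PI*p))) * q).
Proof.
have d1 : derivable_pt_lim (fun t => p + t * q) 0 q.
  have := derivable_pt_lim_plus _ _ 0 _ _ (derivable_pt_lim_const p 0)
      (derivable_pt_lim_scal id q 0 1 (derivable_pt_lim_id 0)).
  rewrite Rmult_1_r Rplus_0_l => h.
  have e1 : (fun t => p + t * q) = (fun t => fct_cte p t + mult_real_fct q id t).
    by apply: functional_extensionality => t; rewrite /mult_real_fct /id /fct_cte /=; ring.
  rewrite e1; exact: h.
have := derivable_pt_lim_comp _ (hfun a c) 0 _ _ d1 (hder a c (p + 0 * q)).
rewrite Rmult_0_l Rplus_0_r.
by rewrite /comp.
Qed.

Lemma hcont a c x : continuity_pt (hfun a c) x.
Proof. apply: derivable_continuous_pt; exists (c - a * exp(-(4*PI*x))); exact: hder. Qed.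

Definition Lb (a c : R) : R := - (c * c) / (4 * a * PI).

Lemma h_low a c t : 0 < a -> 0 <= c -> Lb a c <= hfun a c t.
Proof.
move=> ha hc; rewrite /Lb /hfun.
have hP := PI_RGT_0.
have hexp := exp_pos (-(4*PI*t)).
have hLb : - (c * c) / (4 * a * PI) <= 0.
  rewrite /Rdiv; have hi : 0 < / (4 * a * PI) by apply: Rinv_0_lt_compat; nra.
  nra.
case: (Rle_lt_dec 0 t) => ht.
- have : 0 <= a * exp (- (4 * PI * t)) / (4 * PI).
    rewrite /Rdiv; apply: Rmult_le_pos; first nra.
    apply: Rlt_le; apply: Rinv_0_lt_compat; nra.
  nra.
- (* exp(u) >= (1+u/2)^2 with u = -4 pi t > 0 *)
  set u := - (4 * PI * t).
  have hu : 0 < u by rewrite /u; nra.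
  have e : exp u = exp (u/2) * exp (u/2) by rewrite -exp_plus; congr exp; field.
  have h1 := exp_ineq1_le (u/2).
  have h2 : (1 + u/2) * (1 + u/2) <= exp u by rewrite e; nra.
  have h3 : PI * PI * t * t * 4 <= exp u by rewrite /u in h2 *; nra.
  have key : a * PI * t * t <= a * exp u / (4 * PI).
    apply: (Rmult_le_reg_r (4 * PI)); first nra.
    have -> : a * exp u / (4 * PI) * (4 * PI) = a * exp u by field; lra.
    nra.
  have key2 : - (c * c) / (4 * a * PI) <= a * PI * t * t + c * t.
    apply: (Rmult_le_reg_r (4 * a * PI)); first nra.
    have -> : - (c * c) / (4 * a * PI) * (4 * a * PI) = - (c * c) by field; lra.
    have : 0 <= (2 * a * PI * t + c) * (2 * a * PI * t + c) by apply: Rle_0_sqr.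
    nra.
  rewrite /u in key; apply: (Rle_trans _ _ _ key2); apply: Rplus_le_compat_r; exact: key.
Qed.

Lemma exp_le x y : x <= y -> exp x <= exp y.
Proof. case=> h; [apply: Rlt_le; exact: exp_increasing | rewrite h; lra]. Qed.

Lemma h_gap a c s t : hfun a c s + hfun a c t - 2 * hfun a c ((s + t) / 2) =
  a / (4*PI) * ((exp (-(2*PI*s)) - exp (-(2*PI*t))) * (exp (-(2*PI*s)) - exp (-(2*PI*t)))).
Proof.
rewrite /hfun.
have hP := PI4_pos.
set p := exp (-(2*PI*s)). set q := exp (-(2*PI*t)).
have es : exp (-(4*PI*s)) = p * p by rewrite /p -exp_plus; congr exp; field.
have et : exp (-(4*PI*t)) = q * q by rewrite /q -exp_plus; congr exp; field.
have em : exp (-(4*PI*((s+t)/2))) = p * q by rewrite /p /q -exp_plus; congr exp; field.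
rewrite es et em.
field; lra.
Qed.

Lemma h_conv a c s t : 0 <= a -> 0 <= hfun a c s + hfun a c t - 2 * hfun a c ((s + t) / 2).
Proof.
move=> ha; rewrite h_gap.
have hP := PI4_pos.
apply: Rmult_le_pos; last exact: Rle_0_sqr.
rewrite /Rdiv; apply: Rmult_le_pos => //; apply: Rlt_le; exact: Rinv_0_lt_compat.
Qed.

Lemma exp_diff_lb u v B : u <= B -> v <= B ->
  exp (-B) * Rabs (u - v) <= Rabs (exp (-u) - exp (-v)).
Proof.
wlog huv : u v / v <= u.
  move=> W hu hv; case: (Rle_lt_dec v u) => h; first exact: W.
  rewrite Rabs_minus_sym (Rabs_minus_sym (exp (-u))); apply: W => //; lra.
move=> hu hv.
rewrite (Rabs_right (u - v)); last lra.
have h1 : exp (-u) <= exp (-v) by apply: exp_le; lra.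
rewrite Rabs_minus_sym (Rabs_right (exp (-v) - exp (-u))); last lra.
have e : exp (-v) = exp (-u) * exp (u - v) by rewrite -exp_plus; congr exp; ring.
have h2 := exp_ineq1_le (u - v).
have h3 : exp (-B) <= exp (-u) by apply: exp_le; lra.
have h4 := exp_pos (-B).
rewrite e.
have : exp (-u) * (u - v) <= exp (-u) * exp (u - v) - exp (-u).
  have := exp_pos (-u); nra.
have : exp (-B) * (u - v) <= exp (-u) * (u - v) by apply: Rmult_le_compat_r; lra.
lra.
Qed.

Lemma h_sc a c s t B : 0 <= a -> s <= B -> t <= B ->
  a * PI * exp (-(4*PI*B)) * ((s - t) * (s - t)) <=
  hfun a c s + hfun a c t - 2 * hfun a c ((s + t) / 2).
Proof.
move=> ha hs ht; rewrite h_gap.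
have hP := PI_RGT_0.
have h := exp_diff_lb (2*PI*s) (2*PI*t) (2*PI*B) ltac:(nra) ltac:(nra).
set D := exp (- (2 * PI * s)) - exp (- (2 * PI * t)) in h *.
have hE : exp (- (4 * PI * B)) = exp (- (2 * PI * B)) * exp (- (2 * PI * B)).
  by rewrite -exp_plus; congr exp; ring.
have hpos := exp_pos (- (2 * PI * B)).
have hab : Rabs (2 * PI * s - 2 * PI * t) = 2 * PI * Rabs (s - t).
  have -> : 2 * PI * s - 2 * PI * t = (2 * PI) * (s - t) by ring.
  rewrite Rabs_mult Rabs_right //; lra.
rewrite hab in h.
have hsq : (exp (- (2 * PI * B)) * (2 * PI * Rabs (s - t))) * (exp (- (2 * PI * B)) * (2 * PI * Rabs (s - t)))
   <= D * D.
  have -> : D * D = Rabs D * Rabs D by rewrite -Rabs_mult Rabs_right //; apply: Rle_ge; exact: Rle_0_sqr.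
  have : 0 <= exp (- (2 * PI * B)) * (2 * PI * Rabs (s - t)).
    apply: Rmult_le_pos; [lra | apply: Rmult_le_pos; [lra | exact: Rabs_pos]].
  nra.
have hst : Rabs (s - t) * Rabs (s - t) = (s - t) * (s - t) by rewrite -Rabs_mult Rabs_right //; apply: Rle_ge; exact: Rle_0_sqr.
rewrite hE.
have ha4 : 0 <= a / (4 * PI) by rewrite /Rdiv; apply: Rmult_le_pos => //; apply: Rlt_le; apply: Rinv_0_lt_compat; lra.
apply: Rle_trans (Rmult_le_compat_l _ _ _ ha4 hsq).
right; rewrite -hst; field; lra.
Qed.

Lemma hfun00 t : hfun 0 0 t = 0.
Proof. rewrite /hfun; field; have := PI4_pos; lra. Qed.

Lemma Lb00 : Lb 0 0 = 0.
Proof. rewrite /Lb /Rdiv Rmult_0_l Ropp_0 Rmult_0_l //. Qed.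

Lemma cv_const (x : R) : Un_cv (fun _ => x) x.
Proof. move=> e he; exists 0%nat => k _; rewrite /Rdist Rminus_diag_eq // Rabs_R0; lra. Qed.

Lemma inv_small (e : R) : 0 < e -> exists K : nat, forall p : nat, (p >= K)%coq_nat -> / (INR p + 1) < e.
Proof.
move=> he; have [K hK] := INR_unbounded (/ e).
exists K => p hp.
have hpK : INR K <= INR p by apply: le_INR.
have hp0 := pos_INR p.
have hie : 0 < / e by apply: Rinv_0_lt_compat.
rewrite -(Rinv_inv e).
apply: Rinv_lt_contravar; first by apply: Rmult_lt_0_compat; lra.
lra.
Qed.

Lemma core (d : nat) (a c : vec d) (N : vec d -> Prop)
 (hac : forall j, (a j = 0 /\ c j = 0) \/ (0 < a j /\ 0 < c j))
 (N0 : N (fun _ => 0))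
 (Nlin : forall Y W s t, N Y -> N W -> N (fun j => s * Y j + t * W j))
 (Ncl : forall (Ys : nat -> vec d) (l : vec d), (forall k, N (Ys k)) ->
     (forall j, 0 < a j -> Un_cv (fun k => Ys k j) (l j)) ->
     exists Y, N Y /\ forall j, 0 < a j -> Y j = l j) :
 exists Y, N Y /\ forall W, N W ->
   \big[Rplus/0]_(j < d) ((c j - a j * exp (-(4*PI*Y j))) * W j) = 0.
Proof.
pose h j t := hfun (a j) (c j) t.
pose g (Y : vec d) := \big[Rplus/0]_(j < d) h j (Y j).
pose L j := Lb (a j) (c j).
have hlow : forall j t, L j <= h j t /\ L j <= 0.
  move=> j t; rewrite /L /h; case: (hac j) => [[-> ->]|[ha hc]].
  - rewrite hfun00 Lb00; lra.
  - split; first by apply: h_low; lra.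
    rewrite /Lb /Rdiv; have := PI_RGT_0 => hP.
    have hi : 0 < / (4 * a j * PI) by apply: Rinv_0_lt_compat; nra.
    nra.
pose Ls := \big[Rplus/0]_(j < d) L j.
have hglow : forall Y, Ls <= g Y.
  move=> Y; apply: sR_le => j; exact: (hlow j (Y j)).1.
have hcoer : forall Y j, 0 < a j -> c j * Y j <= g Y - Ls.
  move=> Y j ha.
  have e : g Y - Ls = \big[Rplus/0]_(i < d) (h i (Y i) - L i) by rewrite sR_sub.
  rewrite e.
  have hnn : forall i, 0 <= h i (Y i) - L i by move=> i; have := (hlow i (Y i)).1; lra.
  have := @sR_term d (fun i => h i (Y i) - L i) j hnn => /=.
  have := (hlow j (Y j)).2.
  have : 0 <= a j * exp (- (4 * PI * Y j)) / (4 * PI).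
    rewrite /Rdiv; apply: Rmult_le_pos; first by have := exp_pos (- (4 * PI * Y j)); nra.
    apply: Rlt_le; apply: Rinv_0_lt_compat; exact: PI4_pos.
  rewrite /h /hfun; lra.
pose E := fun r => exists Y, N Y /\ r = - g Y.
have hEb : bound E.
  exists (- Ls) => r [Y [_ ->]]; have := hglow Y; lra.
have hEn : exists x, E x by exists (- g (fun _ => 0)), (fun _ => 0).
have [M [hM1 hM2]] := completeness E hEb hEn.
pose m := - M.
have hinf1 : forall Y, N Y -> m <= g Y.
  move=> Y hY; have := hM1 (- g Y) (ex_intro _ Y (conj hY erefl)); rewrite /m; lra.
have hinf2 : forall e, 0 < e -> exists Y, N Y /\ g Y < m + e.
  move=> e he; apply: NNPP => hn.
  have : is_upper_bound E (M - e).
    move=> r [Y [hY ->]].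
    case: (Rlt_le_dec (g Y) (m + e)) => hh; first by exfalso; apply: hn; exists Y.
    rewrite /m in hh; lra.
  move/hM2; lra.
have hseq : forall k : nat, exists Y, N Y /\ g Y < m + / (INR k + 1).
  move=> k; apply: hinf2; apply: Rinv_0_lt_compat; have := pos_INR k; lra.
pose Ys k := proj1_sig (constructive_indefinite_description _ (hseq k)).
have hYs : forall k, N (Ys k) /\ g (Ys k) < m + / (INR k + 1).
  move=> k; exact: proj2_sig (constructive_indefinite_description _ (hseq k)).
have hinvle1 : forall k : nat, / (INR k + 1) <= 1.
  move=> k; have := pos_INR k => hk; rewrite -Rinv_1; apply: Rinv_le_contravar; lra.
have hinvpos : forall k : nat, 0 < / (INR k + 1).
  move=> k; apply: Rinv_0_lt_compat; have := pos_INR k; lra.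
pose B j := (m + 1 - Ls) / c j.
have hB : forall k j, 0 < a j -> Ys k j <= B j.
  move=> k j ha.
  have hc : 0 < c j by case: (hac j) => [[h0 _]|[_ hc]] //; lra.
  have := hcoer (Ys k) j ha; have := (hYs k).2; have := hinvle1 k => h1 h2 h3.
  rewrite /B; apply: (Rmult_le_reg_l (c j)) => //.
  have -> : c j * ((m + 1 - Ls) / c j) = m + 1 - Ls by field; lra.
  lra.
have hcau : forall j, 0 < a j -> Cauchy_crit (fun k => Ys k j).
  move=> j ha.
  pose kap := a j * PI * exp (- (4 * PI * B j)).
  have hkap : 0 < kap.
    rewrite /kap; have := exp_pos (- (4 * PI * B j)); have := PI_RGT_0; move=> h1 h2.
    apply: Rmult_lt_0_compat => //; exact: Rmult_lt_0_compat.
  have hest : forall p q : nat, kap * ((Ys p j - Ys q j) * (Ys p j - Ys q j)) <=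
                                 / (INR p + 1) + / (INR q + 1).
    move=> p q.
    pose mid := fun i => / 2 * Ys p i + / 2 * Ys q i.
    have hmid : N mid := Nlin _ _ _ _ (hYs p).1 (hYs q).1.
    have hgm := hinf1 _ hmid.
    have hgp := (hYs p).2. have hgq := (hYs q).2.
    have e : g (Ys p) + g (Ys q) - 2 * g mid =
       \big[Rplus/0]_(i < d) (h i (Ys p i) + h i (Ys q i) - 2 * h i ((Ys p i + Ys q i) / 2)).
      rewrite sR_sub sR_add sR_scal; congr (_ - 2 * _).
      apply: sR_ext => i; rewrite /mid; congr (h i); field.
    have hnn : forall i, 0 <= h i (Ys p i) + h i (Ys q i) - 2 * h i ((Ys p i + Ys q i) / 2).
      move=> i; apply: h_conv; case: (hac i) => [[-> _]|[hh _]]; lra.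
    have ht : h j (Ys p j) + h j (Ys q j) - 2 * h j ((Ys p j + Ys q j) / 2) <=
       \big[Rplus/0]_(i < d) (h i (Ys p i) + h i (Ys q i) - 2 * h i ((Ys p i + Ys q i) / 2))
       := @sR_term d (fun i => h i (Ys p i) + h i (Ys q i) - 2 * h i ((Ys p i + Ys q i) / 2)) j hnn.
    have hsc : kap * ((Ys p j - Ys q j) * (Ys p j - Ys q j)) <=
       h j (Ys p j) + h j (Ys q j) - 2 * h j ((Ys p j + Ys q j) / 2).
      exact: (h_sc (a j) (c j) (Ys p j) (Ys q j) (B j) ltac:(lra) (hB p j ha) (hB q j ha)).
    rewrite -e in ht. lra.
  move=> eps heps.
  have he2 : 0 < kap * (eps * eps) / 2.
    apply: Rmult_lt_0_compat; last lra; apply: Rmult_lt_0_compat => //; nra.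
  have [K hK] := inv_small _ he2.
  exists K => p q hp hq.
  have h1 := hK p hp. have h2 := hK q hq.
  have := hest p q => h3.
  have h4 : kap * ((Ys p j - Ys q j) * (Ys p j - Ys q j)) < kap * (eps * eps) by lra.
  have h5 : (Ys p j - Ys q j) * (Ys p j - Ys q j) < eps * eps.
    apply: (Rmult_lt_reg_l kap) => //.
  rewrite /Rdist.
  have h6 : Rabs (Ys p j - Ys q j) * Rabs (Ys p j - Ys q j) < eps * eps.
    by rewrite -Rabs_mult Rabs_right //; apply: Rle_ge; apply: Rle_0_sqr.
  have := Rabs_pos (Ys p j - Ys q j); nra.
have hl : forall j, exists lj, 0 < a j -> Un_cv (fun k => Ys k j) lj.
  move=> j; case: (Rlt_dec 0 (a j)) => ha.
  - have [lj hlj] := R_complete _ (hcau j ha); by exists lj.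
  - by exists 0.
pose lf j := proj1_sig (constructive_indefinite_description _ (hl j)).
have hlf : forall j, 0 < a j -> Un_cv (fun k => Ys k j) (lf j).
  move=> j; exact: proj2_sig (constructive_indefinite_description _ (hl j)).
have [Yi [hYi hYil]] := Ncl Ys lf (fun k => (hYs k).1) hlf.
have hcv1 : Un_cv (fun k => g (Ys k)) (g Yi).
  apply: sR_cv => i.
  case: (hac i) => [[ha hc]|[ha hc]].
  - rewrite /h ha hc hfun00.
    have -> : (fun k => hfun 0 0 (Ys k i)) = (fun _ => 0).
      by apply: functional_extensionality => k; rewrite hfun00.
    exact: cv_const.
  - rewrite /h (hYil i ha); apply: continuity_seq; first exact: hcont.
    exact: hlf.
have hcv2 : Un_cv (fun k => g (Ys k)) m.
  move=> eps heps; have [K hK] := inv_small _ heps.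
  exists K => k hk; have := hK k hk; have := (hYs k).2; have := hinf1 _ (hYs k).1.
  rewrite /Rdist => h1 h2 h3; rewrite Rabs_right; lra.
have hgYi : g Yi = m := UL_sequence _ _ _ hcv1 hcv2.
exists Yi; split => // W hW.
pose f t := \big[Rplus/0]_(i < d) hfun (a i) (c i) (Yi i + t * W i).
have hfd : derivable_pt_lim f 0 (\big[Rplus/0]_(i < d) ((c i - a i * exp (-(4*PI*Yi i))) * W i)).
  apply: sR_deriv => i; exact: hder_aff.
pose pr := exist (fun l => derivable_pt_lim f 0 l) _ hfd : derivable_pt f 0.
have := deriv_minimum f (-1) 1 0 pr ltac:(lra) ltac:(lra).
rewrite /derive_pt /= => -> //.
move=> x _ _.
have e0 : f 0 = g Yi by apply: sR_ext => i; rewrite Rmult_0_l Rplus_0_r.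
have ex : f x = g (fun j => 1 * Yi j + x * W j) by apply: sR_ext => i; rewrite Rmult_1_l.
rewrite e0 ex hgYi; apply: hinf1; exact: Nlin.
Qed.

Lemma cnormsq_nonneg c : 0 <= cnormsq c.
Proof. rewrite /cnormsq; have := Rle_0_sqr (fst c); have := Rle_0_sqr (snd c); rewrite /Rsqr; lra. Qed.

Lemma cnormsq_eq0 c : cnormsq c = 0 -> c = czero.
Proof.
case: c => x y; rewrite /cnormsq /= => h.
have := Rle_0_sqr x; have := Rle_0_sqr y; rewrite /Rsqr => h1 h2.
have hx : x * x = 0 by lra. have hy : y * y = 0 by lra.
case: (Rmult_integral _ _ hx) => ->; case: (Rmult_integral _ _ hy) => -> //.
Qed.

Lemma cnormsq_pos c : c <> czero -> 0 < cnormsq c.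
Proof.
move=> h; case: (Rle_lt_or_eq_dec _ _ (cnormsq_nonneg c)) => // e.
by exfalso; apply: h; apply: cnormsq_eq0.
Qed.

Lemma cnormsq_act Y (z : cplx) : cnormsq (cscale (exp (- (2 * PI * Y))) z) = exp (-(4*PI*Y)) * cnormsq z.
Proof.
rewrite /cnormsq /cscale /=.
have e : exp (-(4*PI*Y)) = exp (- (2 * PI * Y)) * exp (- (2 * PI * Y)) by rewrite -exp_plus; congr exp; ring.
rewrite e; ring.
Qed.

Lemma cscale0 r : cscale r czero = czero.
Proof. by rewrite /cscale /czero /= Rmult_0_r. Qed.

Lemma dot_lin k (u v w : vec k) (t : R) : dot (fun i => u i + t * v i) w = dot u w + t * dot v w.
Proof.
rewrite /dot -sR_scal -sR_add; apply: sR_ext => i; ring.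
Qed.

Lemma dot_sym k (u v : vec k) : dot u v = dot v u.
Proof. rewrite /dot; apply: sR_ext => i; ring. Qed.

Lemma bdd_zero n d (X : 'I_d -> vec n) (lam : vec d) xi eta :
  delta_bounded X lam -> inDelta X lam xi -> (forall j, dot eta (X j) = 0) -> eta = (fun _ => 0).
Proof.
move=> [B hB] hxi heta; apply: functional_extensionality => i.
apply: NNPP => hne.
pose t := (B + 1 + Rabs (xi i)) / eta i.
pose mu := fun k => xi k + t * eta k.
have hmu : inDelta X lam mu.
  move=> j; rewrite /mu dot_lin heta Rmult_0_r Rplus_0_r; exact: hxi.
have := hB mu hmu i; rewrite /mu /t.
have -> : xi i + (B + 1 + Rabs (xi i)) / eta i * eta i = xi i + (B + 1 + Rabs (xi i)) by field.
have := Rle_abs (- xi i); rewrite Rabs_Ropp => h1.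
have hB0 : 0 <= B by have := hB xi hxi i; have := Rabs_pos (xi i); lra.
rewrite Rabs_right; lra.
Qed.

Lemma pi_lin n d (X : 'I_d -> vec n) Y W s t i :
  pi_map X (fun j => s * Y j + t * W j) i = s * pi_map X Y i + t * pi_map X W i.
Proof. rewrite /pi_map -!sR_scal -sR_add; apply: sR_ext => j; ring. Qed.

Lemma in_n_lin n d (X : 'I_d -> vec n) Y W s t :
  in_n X Y -> in_n X W -> in_n X (fun j => s * Y j + t * W j).
Proof. move=> h1 h2 i; rewrite pi_lin h1 h2; ring. Qed.

Lemma in_n_0 n d (X : 'I_d -> vec n) : in_n X (fun _ => 0).
Proof. move=> i; rewrite /pi_map; apply: sR_0 => j; ring. Qed.

Lemma exp_mono u v : (exp (-(4*PI*u)) - exp (-(4*PI*v))) * (u - v) <= 0.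
Proof.
have hP := PI_RGT_0.
case: (Rle_lt_dec u v) => h.
- have : exp (-(4*PI*v)) <= exp (-(4*PI*u)) by apply: exp_le; nra.
  nra.
- have : exp (-(4*PI*u)) <= exp (-(4*PI*v)) by apply: exp_le; nra.
  nra.
Qed.

Lemma exp_mono_eq u v : (exp (-(4*PI*u)) - exp (-(4*PI*v))) * (u - v) = 0 -> u = v.
Proof.
have hP := PI_RGT_0.
move=> h; case: (Rmult_integral _ _ h) => h'; last lra.
have : exp (-(4*PI*u)) = exp (-(4*PI*v)) by lra.
move/exp_inv => h2; nra.
Qed.

Lemma ncl n d (X : 'I_d -> vec n) (I : pred 'I_d) (Ys : nat -> vec d) (l : vec d) :
  (forall k, in_n X (Ys k)) -> (forall j, ~~ I j -> Un_cv (fun k => Ys k j) (l j)) ->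
  exists Y, in_n X Y /\ forall j, ~~ I j -> Y j = l j.
Proof.
move=> hYs hcv.
pose K := kermx (Amat X). pose D := Dmask I. pose V := (K *m D)%ring.
pose lr := rv (fun j => if I j then 0 else l j).
have hv : forall k, (mulmx (rv (Ys k)) D <= V)%MS.
  move=> k; apply: submxMr; exact/in_n_ker.
have hlr : (lr <= V)%MS.
  rewrite submxE; apply/eqP/matrixP => i r; rewrite (ord1 i) mx0E mxE.
  pose C := cokermx V.
  have hk : forall k, \big[Rplus/0]_(j < d) ((if I j then 0 else Ys k j) * C j r) = 0.
    move=> k; have := hv k; rewrite submxE => /eqP h.
    have := congr1 (fun M : 'M[R]_(1, d) => M ord0 r) h; rewrite /= mx0E mxE => hh.
    rewrite -[X in _ = X]hh.
    apply: sR_ext => j; rewrite Dmask_mul /rv mxE //.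
  have hc : Un_cv (fun k => \big[Rplus/0]_(j < d) ((if I j then 0 else Ys k j) * C j r))
                  (\big[Rplus/0]_(j < d) ((if I j then 0 else l j) * C j r)).
    apply: sR_cv => j; cbv beta; case: (boolP (I j)) => hj.
    - exact: cv_const.
    - apply: CV_mult; first exact: hcv.
      exact: cv_const.
  have e : (fun k => \big[Rplus/0]_(j < d) ((if I j then 0 else Ys k j) * C j r)) = (fun _ => 0).
    by apply: functional_extensionality => k; exact: hk.
  rewrite e in hc.
  have := UL_sequence _ _ _ hc (cv_const 0) => hh.
  rewrite -[X in _ = X]hh.
  apply: sR_ext => j; rewrite /lr /rv mxE //.
exists (unrv (lr *m pinvmx V *m K)%ring); split.
  apply/in_n_ker; rewrite unrvK; exact: submxMl.
have E : (rv (unrv (lr *m pinvmx V *m K)%ring) *m D)%ring = lr.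
  by rewrite unrvK -mulmxA mulmxKpV.
move=> j hj.
have hh := congr1 (fun M : 'M[R]_(1, d) => M ord0 j) E.
rewrite /= Dmask_mul (negbTE hj) {1}/rv mxE in hh.
rewrite hh /lr /rv mxE (negbTE hj) //.
Qed.

Lemma xi_exists n d (X : 'I_d -> vec n) (cv : vec d) :
  (forall W, in_n X W -> dot cv W = 0) -> exists xi : vec n, forall j, cv j = dot xi (X j).
Proof.
move=> h.
have h0 : (rv cv *m (kermx (Amat X))^T)%ring = 0%ring.
  apply/matrixP => i r; rewrite (ord1 i) mx0E.
  have hr : in_n X (unrv (row r (kermx (Amat X)))).
    apply/in_n_ker; rewrite unrvK; exact: row_sub.
  have := h _ hr; rewrite /dot => <-.
  rewrite mxE; apply: sR_ext => j; rewrite /unrv /rv !mxE //.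
have [xi hxi] := LA1 _ _ _ _ h0.
exists (unrv xi) => j; rewrite dotA_mx -hxi /rv mxE //.
Qed.

Lemma decomp n d (X : 'I_d -> vec n) (I : pred 'I_d) (Y : vec d) :
  in_n X Y -> exists Yf, in_r X I Yf /\ forall j, ~~ I j -> Yf j = Y j.
Proof.
move=> hY.
pose B := (kermx (Amat X) :&: kermx (Dmask I))%MS.
have [w [hw hwo]] := LA3 _ _ B (rv Y).
have hwI : in_n_I X I (unrv w) by apply/in_nI_ker; rewrite unrvK.
exists (unrv (rv Y - w)%ring); split; [split|].
- apply/in_n_ker; rewrite unrvK.
  have h1 : (rv Y <= kermx (Amat X))%MS by apply/in_n_ker.
  have h2 : (w <= kermx (Amat X))%MS by apply: submx_trans hw (capmxSl _ _).
  case/submxP: h1 => D1 ->; case/submxP: h2 => D2 ->.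
  rewrite -mulmxBl; exact: submxMl.
- move=> W hW.
  have hWB : (rv W <= B)%MS by apply/in_nI_ker.
  case/submxP: hWB => D' hD'.
  rewrite dot_mx unrvK hD' trmx_mul mulmxA hwo mul0mx mx0E //.
- move=> j hj; rewrite /unrv !mxE.
  have := hwI.2 j hj; rewrite /unrv => ->.
  exact: subr0.
Qed.

Lemma cnormsq0 : cnormsq czero = 0.
Proof. rewrite /cnormsq /czero /=; ring. Qed.

Lemma cscale_inj r1 r2 (z : cplx) : z <> czero -> cscale r1 z = cscale r2 z -> r1 = r2.
Proof.
case: z => p q hz; rewrite /cscale /= => [[h1 h2]].
case: (Req_dec p 0) => hp.
- case: (Req_dec q 0) => hq; first by exfalso; apply: hz; rewrite hp hq.
  apply: (Rmult_eq_reg_r q) => //.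
- apply: (Rmult_eq_reg_r p) => //.
Qed.

Theorem mainTheorem11 (n d : nat) (X : 'I_d -> vec n) (lam : vec d)
  (Hfull : full_dim X lam) (Hbdd : delta_bounded X lam) (Hfacets : facets_distinct X lam)
  (I : pred 'I_d) (HF : is_face X lam I)
  (z : 'I_d -> cplx) (Hz : in_CstarFc I z) :
  exists (x : 'I_d -> cplx) (xi : vec n) (Y : vec d),
    (Psi_zero X lam x /\ in_face X lam I xi /\ in_r X I Y /\
     (forall w, (in_orbit X z w /\ Psi_zero X lam w) <-> w = x) /\
     act Y z = x /\
     (forall j, dot xi (X j) - lam j = cnormsq (x j))) /\
    (forall (x' : 'I_d -> cplx) (xi' : vec n) (Y' : vec d),
      Psi_zero X lam x' /\ in_face X lam I xi' /\ in_r X I Y' /\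
      (forall w, (in_orbit X z w /\ Psi_zero X lam w) <-> w = x') /\
      act Y' z = x' /\
      (forall j, dot xi' (X j) - lam j = cnormsq (x' j)) ->
      x' = x /\ xi' = xi /\ Y' = Y).
Proof.
have [mu0 [hmuD hmuF]] := HF.
pose a j := cnormsq (z j).
pose c j := dot mu0 (X j) - lam j.
have haI : forall j, (I j -> a j = 0) /\ (~~ I j -> 0 < a j).
  move=> j; split => hj.
  - by rewrite /a ((Hz j).1 hj) cnormsq0.
  - exact: cnormsq_pos ((Hz j).2 hj).
have hac : forall j, (a j = 0 /\ c j = 0) \/ (0 < a j /\ 0 < c j).
  move=> j; case: (boolP (I j)) => hj.
  - left; split; first exact: (haI j).1 hj.
    rewrite /c ((hmuF j).2 hj); ring.
  - right; split; first exact: (haI j).2 hj.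
    have := hmuD j; rewrite /c => h.
    case: (Rge_gt_or_eq_dec _ _ h) => h'; first lra.
    by exfalso; move/negP: hj; apply; apply/(hmuF j).1.
have hNcl : forall (Ys : nat -> vec d) (l : vec d), (forall k, in_n X (Ys k)) ->
     (forall j, 0 < a j -> Un_cv (fun k => Ys k j) (l j)) ->
     exists Y, in_n X Y /\ forall j, 0 < a j -> Y j = l j.
  move=> Ys l hYs hcv.
  have [Y [hY hYl]] := ncl _ _ X I Ys l hYs (fun j hj => hcv j ((haI j).2 hj)).
  exists Y; split => // j hj; apply: hYl; apply/negP => hI.
  have := (haI j).1 hI; lra.
have [Yc [hYc hcrit]] := core d a c (in_n X) hac (in_n_0 _ _ X) (in_n_lin _ _ X) hNcl.
pose x := act Yc z.
have hPsiE : forall Y' W, Psi lam (act Y' z) W =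
    \big[Rplus/0]_(j < d) ((a j * exp (-(4*PI*Y' j)) + lam j) * W j).
  move=> Y' W; rewrite /Psi; apply: sR_ext => j; rewrite /act cnormsq_act /a; ring.
have hmuW : forall W, in_n X W -> \big[Rplus/0]_(j < d) ((c j + lam j) * W j) = 0.
  move=> W hW.
  have e1 : \big[Rplus/0]_(j < d) ((c j + lam j) * W j) =
            \big[Rplus/0]_(j < d) \big[Rplus/0]_(i < n) (mu0 i * (W j * X j i)).
    apply: sR_ext => j; rewrite /c /dot.
    have -> : \big[Rplus/0]_(i < n) (mu0 i * X j i) - lam j + lam j =
              \big[Rplus/0]_(i < n) (mu0 i * X j i) by ring.
    rewrite Rmult_comm -sR_scal; apply: sR_ext => i; ring.
  rewrite e1 sR_exchange.
  apply: sR_0 => i; rewrite sR_scal.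
  have := hW i; rewrite /pi_map => ->; ring.
have hPsix : Psi_zero X lam x.
  move=> W hW; rewrite /x hPsiE.
  have -> : \big[Rplus/0]_(j < d) ((a j * exp (- (4 * PI * Yc j)) + lam j) * W j) =
     \big[Rplus/0]_(j < d) ((c j + lam j) * W j - (c j - a j * exp (- (4 * PI * Yc j))) * W j).
    apply: sR_ext => j; ring.
  rewrite sR_sub hmuW // hcrit //; ring.
have [xi hxi] := xi_exists _ _ X (fun j => cnormsq (x j) + lam j)
   (fun W hW => hPsix W hW).
have hxj : forall j, cnormsq (x j) = exp (-(4*PI*Yc j)) * a j.
  move=> j; rewrite /x /act cnormsq_act //.
have hface : in_face X lam I xi.
  split.
  - move=> j; rewrite -hxi; have := cnormsq_nonneg (x j); lra.
  - move=> j; rewrite -hxi; split.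
    + move=> h; have h0 : cnormsq (x j) = 0 by lra.
      apply: NNPP => hj; move/negP: hj => hj.
      rewrite hxj in h0; have := exp_pos (- (4 * PI * Yc j)); have := (haI j).2 hj; nra.
    + move=> hj; rewrite hxj ((haI j).1 hj); ring.
have [Yf [hYf hYfj]] := decomp _ _ X I Yc hYc.
have hact : act Yf z = x.
  apply: functional_extensionality => j; rewrite /x /act.
  case: (boolP (I j)) => hj.
  - by rewrite ((Hz j).1 hj) !cscale0.
  - by rewrite hYfj.
have horb : forall w, (in_orbit X z w /\ Psi_zero X lam w) <-> w = x.
  move=> w; split; last first.
    move=> ->; split => //; by exists Yc.
  case=> [[Y' [hY' <-]] hPw].
  pose V := fun j => 1 * Y' j + (-1) * Yc j.
  have hV : in_n X V := in_n_lin _ _ X _ _ _ _ hY' hYc.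
  have h1 := hPw V hV. have h2 := hPsix V hV.
  rewrite hPsiE in h1; rewrite /x hPsiE in h2.
  pose F j := - (a j * ((exp (-(4*PI*Y' j)) - exp (-(4*PI*Yc j))) * (Y' j - Yc j))).
  have hF : forall j, 0 <= F j.
    move=> j; rewrite /F; have := exp_mono (Y' j) (Yc j).
    case: (hac j) => [[-> _]|[ha _]] => hm; first lra.
    nra.
  have hF0 : \big[Rplus/0]_(j < d) F j = 0.
    have -> : \big[Rplus/0]_(j < d) F j =
      - (\big[Rplus/0]_(j < d) ((a j * exp (- (4 * PI * Y' j)) + lam j) * V j) -
         \big[Rplus/0]_(j < d) ((a j * exp (- (4 * PI * Yc j)) + lam j) * V j)).
      rewrite -sR_sub -sR_opp; apply: sR_ext => j; rewrite /F /V; ring.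
    rewrite h1 h2; ring.
  apply: functional_extensionality => j; rewrite /x /act.
  case: (boolP (I j)) => hj; first by rewrite ((Hz j).1 hj) !cscale0.
  have hFj := sR_eq0 _ _ hF hF0 j.
  rewrite /F in hFj.
  have ha := (haI j).2 hj.
  have hm : (exp (- (4 * PI * Y' j)) - exp (- (4 * PI * Yc j))) * (Y' j - Yc j) = 0.
    apply: (Rmult_eq_reg_l (a j)); last lra.
    rewrite Rmult_0_r; lra.
  by rewrite (exp_mono_eq _ _ hm).
exists x, xi, Yf; split.
  split => //; split => //; split => //; split => //; split => // j.
  rewrite -hxi; ring.
move=> x' xi' Y' [hPx' [hf' [hr' [horb' [hact' hdot']]]]].
have hx : x' = x.
  symmetry; apply/(horb' x).1; split => //; by exists Yc.
rewrite hx in hdot' hact'.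
have hxi' : xi' = xi.
  pose eta := fun i => xi' i + (-1) * xi i.
  have heta : forall j, dot eta (X j) = 0.
    move=> j; rewrite dot_lin; have := hdot' j; rewrite -hxi; lra.
  have := bdd_zero _ _ X lam xi eta Hbdd hface.1 heta => he.
  apply: functional_extensionality => i.
  have := congr1 (fun f => f i) he; rewrite /eta /=; lra.
split => //; split => //.
have hYj : forall j, ~~ I j -> Y' j = Yf j.
  move=> j hj.
  have e : act Y' z j = act Yf z j by rewrite hact' hact.
  have := cscale_inj _ _ _ ((Hz j).2 hj) e => /exp_inv; have := PI_RGT_0; nra.
pose D := fun j => 1 * Y' j + (-1) * Yf j.
have hD : in_n_I X I D.
  split; first exact: in_n_lin _ _ X _ _ _ _ hr'.1 hYf.1.
  move=> j hj; rewrite /D hYj //; ring.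
have hDD : dot D D = 0.
  have e : dot D D = dot Y' D - dot Yf D.
    by rewrite /dot -sR_sub; apply: sR_ext => j; rewrite /D; ring.
  rewrite e hr'.2 // hYf.2 //; ring.
have hsq : forall j, 0 <= D j * D j by move=> j; apply: Rle_0_sqr.
have := sR_eq0 _ _ hsq hDD => hz0.
apply: functional_extensionality => j.
have := hz0 j => h0; case: (Rmult_integral _ _ h0); rewrite /D; lra.
Qed.
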